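(* Let $f:X\to Y$ be a surjective function between topological spaces. Then $f$ is $gSC^*$-closed if and only if for every subset $I\subseteq Y$ and every open set $M\subseteq X$ with $f^{-1}(I)\subseteq M$ there exists a $gSC^*$-open set $N\subseteq Y$ with $I\subseteq N$ and $f^{-1}(N)\subseteq M$. Likewise, $f$ is $SC^*$-$gSC^*$-closed if and only if for every subset $I\subseteq Y$ and every $SC^*$-open set $M\subseteq X$ with $f^{-1}(I)\subseteq M$ there exists a $gSC^*$-open set $N\subseteq Y$ with $I\subseteq N$ and $f^{-1}(N)\subseteq M$.
   Context: For $A\subseteq Z$ in a topological space $Z$: $A$ is semi-open if $A\subseteq cl(int(A))$, semi-closed if its complement is semi-open; $scl(A)$ is the smallest semi-closed set containing $A$. $A$ is $c^*$-open if $int(cl(A))\subseteq A\subseteq cl(int(A))$. $A$ is $SC^*$-closed if $scl(A)\subseteq U$ whenever $A\subseteq U$ and $U$ is $c^*$-open; $A$ is $SC^*$-open if $Z\setminus A$ is $SC^*$-closed. $SC^*\text{-}cl(A)$ is the intersection of all $SC^*$-closed sets containing $A$. $A$ is $gSC^*$-closed if $SC^*\text{-}cl(A)\subseteq U$ whenever $A\subseteq U$ and $U$ is open; $A$ is $gSC^*$-open if its complement is $gSC^*$-closed. $f$ is $gSC^*$-closed if $f(J)$ is $gSC^*$-closed in $Y$ for every closed $J\subseteq X$; $f$ is $SC^*$-$gSC^*$-closed if $f(J)$ is $gSC^*$-closed in $Y$ for every $SC^*$-closed $J\subseteq X$. *)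

(* Defs.v *)
From HB Require Import structures.
From mathcomp Require Import all_boot all_order all_algebra.
From mathcomp Require Import all_classical all_reals all_analysis.
Set Implicit Arguments. Unset Strict Implicit. Unset Printing Implicit Defensive.
Local Open Scope classical_set_scope.

Section GSCDefs.
Variable Z : topologicalType.
Implicit Types A U : set Z.

Definition semi_open A : Prop := A `<=` closure (interior A).
Definition semi_closed A : Prop := semi_open (~` A).
Definition scl A : set Z := smallest semi_closed A.
Definition cstar_open A : Prop :=
  interior (closure A) `<=` A /\ A `<=` closure (interior A).
Definition SCstar_closed A : Prop :=
  forall U, A `<=` U -> cstar_open U -> scl A `<=` U.
Definition SCstar_open A : Prop := SCstar_closed (~` A).
Definition SCstar_cl A : set Z := smallest SCstar_closed A.
Definition gSCstar_closed A : Prop :=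
  forall U, A `<=` U -> open U -> SCstar_cl A `<=` U.
Definition gSCstar_open A : Prop := gSCstar_closed (~` A).
End GSCDefs.

Definition gSCstar_closed_map (X Y : topologicalType) (f : X -> Y) : Prop :=
  forall J : set X, closed J -> gSCstar_closed (f @` J).
Definition SCstar_gSCstar_closed_map (X Y : topologicalType) (f : X -> Y) : Prop :=
  forall J : set X, SCstar_closed J -> gSCstar_closed (f @` J).

(* Main.v *)
Require Import Defs.
From mathcomp Require Import all_boot all_classical all_reals all_analysis.
Local Open Scope classical_set_scope.

Lemma gen_equiv (X Y : topologicalType) (f : X -> Y) (C : set X -> Prop) :
  (forall J, C J -> gSCstar_closed (f @` J)) <->
  (forall (I : set Y) (M : set X), C (~` M) -> f @^-1` I `<=` M ->
        exists N : set Y, gSCstar_open N /\ I `<=` N /\ f @^-1` N `<=` M).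
Proof.
split.
- move=> H I M CM sub; exists (~` (f @` (~` M))); split; [|split].
  + rewrite /gSCstar_open setCK; exact: H.
  + move=> y Iy [x nMx fx]; apply: nMx; apply: sub; rewrite /preimage /= fx //.
  + move=> x /= nfx; apply: contrapT => nM; apply: nfx; by exists x.
- move=> H J CJ.
  have [N [oN [sIN sNM]]] := H (~` (f @` J)) (~` J) (ltac:(by rewrite setCK) ) (ltac:(move=> x /= nf Jx; apply: nf; by exists x)).
  have -> : f @` J = ~` N.
    apply/seteqP; split.
    + move=> y [x Jx <-] Nfx; exact: (sNM x Nfx Jx).
    + move=> y nN; apply: contrapT => nf; exact: nN (sIN y nf).
  exact: oN.
Qed.

Theorem theorem4p5 (X Y : topologicalType) (f : X -> Y)
  (hsurj : forall y : Y, exists x : X, f x = y) :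
  (gSCstar_closed_map f <->
     (forall (I : set Y) (M : set X), open M -> f @^-1` I `<=` M ->
        exists N : set Y, gSCstar_open N /\ I `<=` N /\ f @^-1` N `<=` M)) /\
  (SCstar_gSCstar_closed_map f <->
     (forall (I : set Y) (M : set X), SCstar_open M -> f @^-1` I `<=` M ->
        exists N : set Y, gSCstar_open N /\ I `<=` N /\ f @^-1` N `<=` M)).
Proof.
split.
- have := @gen_equiv X Y f (@closed X).
  have E : forall M : set X, closed (~` M) = open M by move=> M; rewrite closedC.
  rewrite /gSCstar_closed_map; move=> [H1 H2]; split.
  + by move=> h I M oM; apply: H1 => //; rewrite E.
  + by move=> h; apply: H2 => I M cM; apply: h; rewrite -E.
- exact: @gen_equiv X Y f (@SCstar_closed X).
Qed.
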